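(* Let $F$ be a field and $A$ a quadratic $F$-algebra. (1) If $a,b\in A$ and $B=\mathrm{span}\{1,a,b\}$ satisfies $ab\in B$, then $B$ is a subalgebra of $A$. (2) $A$ is von-Neumann finite (respectively, reversible) if and only if every $3$-dimensional subalgebra of $A$ is von-Neumann finite (respectively, reversible). (3) $A$ is both von-Neumann finite and reversible if and only if every $3$-dimensional subalgebra of $A$ is commutative.
   Context: An $F$-algebra is a vector space with bilinear, not necessarily associative, multiplication. $A$ is quadratic if it is unital and $1,a,a^2$ are linearly dependent for all $a\in A$. $A$ is von-Neumann finite if $ab=1$ implies $ba=1$, and reversible if $ab=0$ implies $ba=0$, for all $a,b\in A$. *)

(* Defs.v *)
(* A (not necessarily associative) F-algebra is modelled as an
   F-vector space A (an lmodType F) with a bilinear multiplication mul and a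
   two-sided unit one. A may be infinite-dimensional. *)
From HB Require Import structures.
From mathcomp Require Import all_boot all_order all_algebra.
Set Implicit Arguments. Unset Strict Implicit. Unset Printing Implicit Defensive.
Import GRing.Theory.
Local Open Scope ring_scope.

Section Defs.
Variables (F : fieldType) (A : lmodType F).

Definition bilinear_mul (mul : A -> A -> A) : Prop :=
  (forall (c : F) (x y z : A), mul (c *: x + y) z = c *: mul x z + mul y z) /\
  (forall (c : F) (x y z : A), mul z (c *: x + y) = c *: mul z x + mul z y).

Definition unit_of (mul : A -> A -> A) (one : A) : Prop :=
  forall x : A, mul one x = x /\ mul x one = x.

Definition quadratic (mul : A -> A -> A) (one : A) : Prop :=
  forall a : A, exists c0 c1 c2 : F,
    (c0 != 0 \/ c1 != 0 \/ c2 != 0) /\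
    c0 *: one + c1 *: a + c2 *: mul a a = 0.

Definition span3 (u1 u2 u3 : A) : A -> Prop :=
  fun x => exists c1 c2 c3 : F, x = c1 *: u1 + c2 *: u2 + c3 *: u3.

Definition lin_indep3 (u1 u2 u3 : A) : Prop :=
  forall c1 c2 c3 : F, c1 *: u1 + c2 *: u2 + c3 *: u3 = 0 ->
    c1 = 0 /\ c2 = 0 /\ c3 = 0.

Definition subspace (B : A -> Prop) : Prop :=
  B 0 /\ forall (c : F) (x y : A), B x -> B y -> B (c *: x + y).

Definition dim3 (B : A -> Prop) : Prop :=
  exists u1 u2 u3 : A, lin_indep3 u1 u2 u3 /\ forall x, B x <-> span3 u1 u2 u3 x.

Definition subalgebra (mul : A -> A -> A) (one : A) (B : A -> Prop) : Prop :=
  subspace B /\ B one /\ forall x y, B x -> B y -> B (mul x y).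

Definition vN_finite_on (mul : A -> A -> A) (one : A) (B : A -> Prop) : Prop :=
  forall a b, B a -> B b -> mul a b = one -> mul b a = one.

Definition reversible_on (mul : A -> A -> A) (B : A -> Prop) : Prop :=
  forall a b, B a -> B b -> mul a b = 0 -> mul b a = 0.

Definition commutative_on (mul : A -> A -> A) (B : A -> Prop) : Prop :=
  forall a b, B a -> B b -> mul a b = mul b a.

End Defs.

Definition whole (T : Type) : T -> Prop := fun _ => True.

(* Main.v *)
Require Import Defs.
From HB Require Import structures.
From mathcomp Require Import all_boot all_order all_algebra ring.
From Stdlib Require Import Classical_Prop.
Set Implicit Arguments. Unset Strict Implicit. Unset Printing Implicit Defensive.
Import GRing.Theory.
Local Open Scope ring_scope.

Section Helpers.
Variables (F : fieldType) (A : lmodType F) (mul : A -> A -> A) (one : A).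
Hypothesis Hbil : bilinear_mul mul.
Hypothesis Hunit : unit_of mul one.

Lemma mul1l x : mul one x = x. Proof. exact: (Hunit x).1. Qed.
Lemma mul1r x : mul x one = x. Proof. exact: (Hunit x).2. Qed.

Lemma lin_gen (f : A -> A) : (forall c x y, f (c *: x + y) = c *: f x + f y) ->
  [/\ f 0 = 0, forall x y, f (x + y) = f x + f y & forall c x, f (c *: x) = c *: f x].
Proof.
move=> Hf.
have f0 : f 0 = 0.
  have := Hf 1 0 0; rewrite !scale1r addr0.
  by move=> /esym /eqP; rewrite -subr_eq0 addrK => /eqP.
split => //.
- by move=> x y; have := Hf 1 x y; rewrite !scale1r.
- by move=> c x; have := Hf c x 0; rewrite !addr0 f0 addr0.
Qed.

Lemma linL z : forall c x y, mul (c *: x + y) z = c *: mul x z + mul y z.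
Proof. by move=> c x y; apply: Hbil.1. Qed.
Lemma linR z : forall c x y, mul z (c *: x + y) = c *: mul z x + mul z y.
Proof. by move=> c x y; apply: Hbil.2. Qed.

Lemma mul0l z : mul 0 z = 0. Proof. by case: (lin_gen (linL z)). Qed.
Lemma mul0r z : mul z 0 = 0. Proof. by case: (lin_gen (linR z)). Qed.
Lemma mulDl z x y : mul (x + y) z = mul x z + mul y z. Proof. by case: (lin_gen (linL z)). Qed.
Lemma mulDr z x y : mul z (x + y) = mul z x + mul z y. Proof. by case: (lin_gen (linR z)). Qed.
Lemma mulZl z c x : mul (c *: x) z = c *: mul x z. Proof. by case: (lin_gen (linL z)). Qed.
Lemma mulZr z c x : mul z (c *: x) = c *: mul z x. Proof. by case: (lin_gen (linR z)). Qed.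
Lemma mulNl z x : mul (- x) z = - mul x z.
Proof. by rewrite -scaleN1r mulZl scaleN1r. Qed.
Lemma mulNr z x : mul z (- x) = - mul z x.
Proof. by rewrite -scaleN1r mulZr scaleN1r. Qed.
Lemma mulBl z x y : mul (x - y) z = mul x z - mul y z. Proof. by rewrite mulDl mulNl. Qed.
Lemma mulBr z x y : mul z (x - y) = mul z x - mul z y. Proof. by rewrite mulDr mulNr. Qed.

Lemma sub_add (S : A -> Prop) x y : @subspace F A S -> S x -> S y -> S (x + y).
Proof. by case=> _ H Sx Sy; have := H 1 x y Sx Sy; rewrite scale1r. Qed.
Lemma sub_scale (S : A -> Prop) c x : @subspace F A S -> S x -> S (c *: x).
Proof. by case=> H0 H Sx; have := H c x 0 Sx H0; rewrite addr0. Qed.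
Lemma sub_opp (S : A -> Prop) x : @subspace F A S -> S x -> S (- x).
Proof. by move=> HS Sx; rewrite -scaleN1r; apply: sub_scale. Qed.

Lemma addr3ACA (x1 x2 x3 y1 y2 y3 : A) :
  x1 + x2 + x3 + (y1 + y2 + y3) = x1 + y1 + (x2 + y2) + (x3 + y3).
Proof. by rewrite addrACA; congr (_ + _); rewrite addrACA. Qed.

Definition lc3 (u1 u2 u3 : A) (a1 a2 a3 : F) := a1 *: u1 + a2 *: u2 + a3 *: u3.

Lemma lc3D u1 u2 u3 a1 a2 a3 b1 b2 b3 :
  lc3 u1 u2 u3 a1 a2 a3 + lc3 u1 u2 u3 b1 b2 b3 = lc3 u1 u2 u3 (a1 + b1) (a2 + b2) (a3 + b3).
Proof. by rewrite /lc3 addr3ACA !scalerDl. Qed.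
Lemma lc3Z u1 u2 u3 c a1 a2 a3 :
  c *: lc3 u1 u2 u3 a1 a2 a3 = lc3 u1 u2 u3 (c * a1) (c * a2) (c * a3).
Proof. by rewrite /lc3 !scalerDr !scalerA. Qed.
Lemma lc3N u1 u2 u3 a1 a2 a3 :
  - lc3 u1 u2 u3 a1 a2 a3 = lc3 u1 u2 u3 (- a1) (- a2) (- a3).
Proof. by rewrite -scaleN1r lc3Z !mulN1r. Qed.

Lemma span3_sub u1 u2 u3 : @subspace F A (span3 u1 u2 u3).
Proof.
split; first by exists 0, 0, 0; rewrite !scale0r !addr0.
move=> c x y [a1 [a2 [a3 ->]]] [b1 [b2 [b3 ->]]].
exists (c * a1 + b1), (c * a2 + b2), (c * a3 + b3).
by rewrite -!/(lc3 _ _ _ _ _ _) lc3Z lc3D.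
Qed.

Lemma span3_1 (u1 u2 u3 : A) : span3 u1 u2 u3 u1.
Proof. by exists 1, 0, 0; rewrite scale1r !scale0r !addr0. Qed.
Lemma span3_2 (u1 u2 u3 : A) : span3 u1 u2 u3 u2.
Proof. by exists 0, 1, 0; rewrite scale1r !scale0r add0r addr0. Qed.
Lemma span3_3 (u1 u2 u3 : A) : span3 u1 u2 u3 u3.
Proof. by exists 0, 0, 1; rewrite scale1r !scale0r !add0r. Qed.

Lemma span_lin (f : A -> A) (S : A -> Prop) (u1 u2 u3 : A) :
  (forall c x y, f (c *: x + y) = c *: f x + f y) -> @subspace F A S ->
  S (f u1) -> S (f u2) -> S (f u3) -> forall y, span3 u1 u2 u3 y -> S (f y).
Proof.
move=> Hf HS S1 S2 S3 y [c1 [c2 [c3 ->]]].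
case: (lin_gen Hf) => _ fD fZ.
rewrite !fD !fZ; do !apply: sub_add => //; exact: sub_scale.
Qed.


Lemma one0_all (Hone : one = 0) (x : A) : x = 0.
Proof. by rewrite -(mul1l x) Hone mul0l. Qed.

Lemma sq_lc (Hq : quadratic mul one) (a : A) : exists al be, mul a a = al *: one + be *: a.
Proof.
case: (Hq a) => c0 [c1 [c2 [Hnz H]]].
case: (eqVneq c2 0) => [c20|c2n0].
  subst c2; rewrite scale0r addr0 in H.
  case: (eqVneq c1 0) => [c10|c1n0].
    subst c1; rewrite scale0r addr0 in H.
    have c0n0 : c0 != 0 by case: Hnz => [//|[]]; rewrite eqxx.
    have one0 : one = 0 by move/eqP: H; rewrite scaler_eq0 (negbTE c0n0) => /eqP.
    by exists 0, 0; rewrite (one0_all one0 a) mul0l !scale0r addr0.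
  have ea : a = (- (c1^-1 * c0)) *: one.
    move/eqP: H; rewrite addrC addr_eq0 => /eqP H.
    by rewrite scaleNr -scalerA -scalerN -H scalerA mulVf // scale1r.
  by exists 0, (- (c1^-1 * c0)); rewrite {1}ea mulZl mul1l scale0r add0r.
move/eqP: H; rewrite addrC addr_eq0 => /eqP H.
exists (- (c2^-1 * c0)), (- (c2^-1 * c1)).
rewrite -[mul a a]scale1r -(mulVf c2n0) -scalerA H !scaleNr -!scalerA.
by rewrite scalerN scalerDr opprD.
Qed.

Lemma part1 (Hq : quadratic mul one) (a b : A) : span3 one a b (mul a b) ->
  subalgebra mul one (span3 one a b).
Proof.
move=> Hab.
have HS := span3_sub one a b.
split => //; split; first exact: span3_1.
have Sq : forall z, span3 one a b z -> span3 one a b (mul z z).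
  move=> z Hz; case: (sq_lc Hq z) => al [be ->].
  apply: sub_add => //; apply: sub_scale => //; exact: span3_1.
have Hba : span3 one a b (mul b a).
  have E : mul b a = mul (a + b) (a + b) - mul a a - mul a b - mul b b.
    rewrite mulDl !mulDr.
    apply/eqP; rewrite eq_sym !subr_eq; apply/eqP.
    by rewrite [RHS]addrC [mul b a + mul b b + mul a b]addrC !addrA.
  have Ssub : forall u v, span3 one a b u -> span3 one a b v -> span3 one a b (u - v).
    by move=> u v Hu Hv; apply: sub_add => //; apply: sub_opp.
  rewrite E; apply: (Ssub _ _); [apply: (Ssub _ _); [apply: (Ssub _ _)|]|].
  - apply: Sq; apply: sub_add => //; [exact: span3_2|exact: span3_3].
  - exact: Sq (span3_2 _ _ _).
  - exact: Hab.
  - exact: Sq (span3_3 _ _ _).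
move=> x y Hx Hy.
pose f := fun z => mul z y.
have Hf : forall c u v, f (c *: u + v) = c *: f u + f v by move=> c u v; apply: linL.
apply: (span_lin (f := f) Hf HS) Hx; rewrite /f.
- by rewrite mul1l.
- apply: (span_lin (f := mul a) (linR a) HS) Hy.
  + rewrite mul1r; exact: span3_2.
  + by apply: Sq; exact: span3_2.
  + exact: Hab.
- apply: (span_lin (f := mul b) (linR b) HS) Hy.
  + rewrite mul1r; exact: span3_3.
  + exact: Hba.
  + by apply: Sq; exact: span3_3.
Qed.


Lemma lc3_1 (u1 u2 u3 : A) a : a *: u1 = lc3 u1 u2 u3 a 0 0.
Proof. by rewrite /lc3 !scale0r !addr0. Qed.
Lemma lc3_2 (u1 u2 u3 : A) a : a *: u2 = lc3 u1 u2 u3 0 a 0.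
Proof. by rewrite /lc3 !scale0r add0r addr0. Qed.
Lemma lc3_3 (u1 u2 u3 : A) a : a *: u3 = lc3 u1 u2 u3 0 0 a.
Proof. by rewrite /lc3 !scale0r !add0r. Qed.
Lemma lc3_perm12 (u1 u2 u3 : A) a1 a2 a3 : lc3 u1 u2 u3 a1 a2 a3 = lc3 u2 u1 u3 a2 a1 a3.
Proof. by rewrite /lc3 [a1 *: u1 + _]addrC. Qed.
Lemma lc3_perm13 (u1 u2 u3 : A) a1 a2 a3 : lc3 u1 u2 u3 a1 a2 a3 = lc3 u3 u2 u1 a3 a2 a1.
Proof. by rewrite /lc3 [RHS]addrC [a3 *: u3 + _]addrC addrA. Qed.

Lemma span3E (u1 u2 u3 z : A) : span3 u1 u2 u3 z <-> exists a1 a2 a3, z = lc3 u1 u2 u3 a1 a2 a3.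
Proof. by []. Qed.

Lemma subspace0 : @subspace F A (fun z => z = 0).
Proof. by split => // c x y -> ->; rewrite scaler0 addr0. Qed.

Lemma commG (p q v : A) : mul one v = mul v one -> mul p v = mul v p -> mul q v = mul v q ->
  forall x, span3 one p q x -> mul x v = mul v x.
Proof.
move=> H1 H2 H3 x Hx.
apply/eqP; rewrite -subr_eq0; apply/eqP.
pose f := fun z => mul z v - mul v z.
have Hf : forall c x y, f (c *: x + y) = c *: f x + f y.
  move=> c x' y'; rewrite /f linL linR scalerBr opprD addrACA.
  done.
apply: (span_lin (f := f) Hf subspace0 _ _ _ Hx); rewrite /f ?H1 ?H2 ?H3 subrr //.
Qed.

Lemma commute_span (p q : A) : mul p q = mul q p ->
  forall x y, span3 one p q x -> span3 one p q y -> mul x y = mul y x.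
Proof.
move=> Hpq x y Hx Hy.
have c1 : forall w, mul one w = mul w one by move=> w; rewrite mul1l mul1r.
have Gp := @commG p q p (c1 p) (erefl _) (esym Hpq).
have Gq := @commG p q q (c1 q) Hpq (erefl _).
apply: (@commG p q y (c1 y)) Hx.
- by rewrite (Gp y Hy).
- by rewrite (Gq y Hy).
Qed.


Lemma key (HvN : vN_finite_on mul one (@whole A)) (Hrev : reversible_on mul (@whole A))
  (a b : A) : span3 one a b (mul a b) -> mul a b = mul b a.
Proof.
case=> [c1 [c2 [c3 Hab]]].
pose p := a - c3 *: one; pose q := b - c2 *: one.
have Epq : mul p q = (c1 + c3 * c2) *: one.
  rewrite /p /q mulBl !mulBr mulZl mul1l mulZr mul1r Hab.
  rewrite mulZl mulZr mul1l scalerA -/(lc3 one a b c1 c2 c3).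
  rewrite (lc3_2 one a b c2) (lc3_3 one a b c3) (lc3_1 one a b (c3 * c2)).
  rewrite (lc3_1 one a b (c1 + c3 * c2)) !lc3N !lc3D lc3N lc3D.
  by f_equal; ring.
have Eqp : mul q p = mul p q.
  rewrite Epq; case: (eqVneq (c1 + c3 * c2) 0) => [s0|sn0].
    rewrite s0 scale0r; apply: Hrev => //; by rewrite Epq s0 scale0r.
  have H1 : mul p ((c1 + c3 * c2)^-1 *: q) = one.
    by rewrite mulZr Epq scalerA mulVf // scale1r.
  have := HvN _ _ I I H1; rewrite mulZl => H2.
  by rewrite -[LHS]scale1r -(mulfV sn0) -scalerA H2.
apply: (commute_span (esym Eqp)).
- by exists c3, 1, 0; rewrite scale1r scale0r addr0 /p addrC subrK.
- by exists c2, 0, 1; rewrite scale1r scale0r addr0 /q addrC subrK.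
Qed.


Lemma dep_comm (a b : A) : ~ lin_indep3 one a b -> mul a b = mul b a.
Proof.
move=> Hn.
have [c1 [c2 [c3 [H Hnz]]]] : exists c1 c2 c3,
    c1 *: one + c2 *: a + c3 *: b = 0 /\ ~ (c1 = 0 /\ c2 = 0 /\ c3 = 0).
  apply: NNPP => Hc; apply: Hn => c1 c2 c3 H; apply: NNPP => Hz; apply: Hc.
  by exists c1, c2, c3.
case: (eqVneq c3 0) => [c30|c3n0].
  subst c3; rewrite scale0r addr0 in H.
  case: (eqVneq c2 0) => [c20|c2n0].
    subst c2; rewrite scale0r addr0 in H.
    have c1n0 : c1 != 0 by apply/eqP => c10; apply: Hnz.
    have one0 : one = 0 by move/eqP: H; rewrite scaler_eq0 (negbTE c1n0) => /eqP.
    by rewrite (one0_all one0 a) mul0l mul0r.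
  have ea : a = (- (c2^-1 * c1)) *: one.
    move/eqP: H; rewrite addrC addr_eq0 => /eqP H.
    by rewrite scaleNr -scalerA -scalerN -H scalerA mulVf // scale1r.
  apply: (@commute_span b b (erefl _)); last exact: span3_2.
  by exists (-(c2^-1*c1)), 0, 0; rewrite !scale0r !addr0.
move/eqP: H; rewrite addr_eq0 => /eqP H.
apply: (@commute_span a a (erefl _)); first exact: span3_2.
exists (-(c3^-1*c1)), (-(c3^-1*c2)), 0.
rewrite scale0r addr0 -[b]scale1r -(mulVf c3n0) -scalerA -[c3 *: b]opprK -H.
by rewrite scalerN scalerDr opprD !scalerA !scaleNr.
Qed.

Lemma exch (u1 u2 u3 : A) d1 d2 d3 : d1 != 0 -> one = lc3 u1 u2 u3 d1 d2 d3 ->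
  forall z, span3 u1 u2 u3 z -> span3 one u2 u3 z.
Proof.
move=> dn Hone z [c1 [c2 [c3 ->]]].
exists (c1 / d1), (c2 - c1 / d1 * d2), (c3 - c1 / d1 * d3).
rewrite -/(lc3 u1 u2 u3 c1 c2 c3).
rewrite (lc3_2 u1 u2 u3 (c2 - c1 / d1 * d2)) (lc3_3 u1 u2 u3 (c3 - c1 / d1 * d3)).
rewrite Hone lc3Z !lc3D.
by f_equal; field.
Qed.

Lemma dim3_red (B : A -> Prop) : subalgebra mul one B -> dim3 B ->
  one = 0 \/ exists x y, B x /\ B y /\ forall z, B z -> span3 one x y z.
Proof.
move=> [HS [B1 _]] [u1 [u2 [u3 [_ HB]]]].
have [d1 [d2 [d3 Hone]]] := (HB one).1 B1.
rewrite -/(lc3 u1 u2 u3 d1 d2 d3) in Hone.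
have Bu1 : B u1 by apply/HB; exact: span3_1.
have Bu2 : B u2 by apply/HB; exact: span3_2.
have Bu3 : B u3 by apply/HB; exact: span3_3.
case: (eqVneq d1 0) => [d10|d1n0]; last first.
  right; exists u2, u3; split; first done; split; first done; move=> z /HB; apply: (exch d1n0 Hone).
case: (eqVneq d2 0) => [d20|d2n0]; last first.
  right; exists u1, u3; split; first done; split; first done; move=> z /HB [c1 [c2 [c3 Hz]]].
  rewrite lc3_perm12 in Hone.
  apply: (exch d2n0 Hone); exists c2, c1, c3.
  by rewrite Hz -/(lc3 u1 u2 u3 c1 c2 c3) lc3_perm12.
case: (eqVneq d3 0) => [d30|d3n0]; last first.
  right; exists u2, u1; split; first done; split; first done; move=> z /HB [c1 [c2 [c3 Hz]]].
  rewrite lc3_perm13 in Hone.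
  apply: (exch d3n0 Hone); exists c3, c2, c1.
  by rewrite Hz -/(lc3 u1 u2 u3 c1 c2 c3) lc3_perm13.
left; by rewrite Hone d10 d20 d30 /lc3 !scale0r !addr0.
Qed.

End Helpers.

Theorem lemma3p4 (F : fieldType) (A : lmodType F) (mul : A -> A -> A) (one : A)
    (Hbil : bilinear_mul mul) (Hunit : unit_of mul one) (Hquad : quadratic mul one) :
  (* (1) *)
  (forall a b : A, span3 one a b (mul a b) -> subalgebra mul one (span3 one a b)) /\
  (* (2) von Neumann finiteness *)
  (vN_finite_on mul one (@whole A) <->
     (forall B : A -> Prop, subalgebra mul one B -> dim3 B -> vN_finite_on mul one B)) /\
  (* (2) reversibility *)
  (reversible_on mul (@whole A) <->
     (forall B : A -> Prop, subalgebra mul one B -> dim3 B -> reversible_on mul B)) /\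
  (* (3) *)
  ((vN_finite_on mul one (@whole A) /\ reversible_on mul (@whole A)) <->
     (forall B : A -> Prop, subalgebra mul one B -> dim3 B -> commutative_on mul B)).
Proof.
have P1 : forall a b : A, span3 one a b (mul a b) -> subalgebra mul one (span3 one a b).
  by move=> a b; apply: part1.
have Hsub : forall a b, lin_indep3 one a b -> span3 one a b (mul a b) ->
    subalgebra mul one (span3 one a b) /\ dim3 (span3 one a b).
  by move=> a b Hli Hab; split; [exact: P1 | exists one, a, b].
have S0 : forall a b : A, span3 one a b 0.
  by move=> a b; exact: (span3_sub one a b).1.
split => //; split; [|split].
- split; first by move=> H B _ _ a b _ _; exact: H.
  move=> H a b _ _ Hab; case: (classic (lin_indep3 one a b)) => Hli.
    have [Hs Hd] : subalgebra mul one (span3 one a b) /\ dim3 (span3 one a b).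
      by apply: Hsub => //; rewrite Hab; exact: span3_1.
    exact: (H _ Hs Hd a b (span3_2 _ _ _) (span3_3 _ _ _) Hab).
  by rewrite -(dep_comm Hbil Hunit Hli).
- split; first by move=> H B _ _ a b _ _; exact: H.
  move=> H a b _ _ Hab; case: (classic (lin_indep3 one a b)) => Hli.
    have [Hs Hd] : subalgebra mul one (span3 one a b) /\ dim3 (span3 one a b).
      by apply: Hsub => //; rewrite Hab.
    exact: (H _ Hs Hd a b (span3_2 _ _ _) (span3_3 _ _ _) Hab).
  by rewrite -(dep_comm Hbil Hunit Hli).
- split.
    move=> [HvN Hrev] B HB Hd a b Ba Bb.
    case: (dim3_red HB Hd) => [one0|[x [y [Bx [By Hz]]]]].
      by rewrite (one0_all Hbil Hunit one0 (mul a b)) (one0_all Hbil Hunit one0 (mul b a)).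
    have Hxy : mul x y = mul y x.
      apply: (key Hbil Hunit HvN Hrev); apply: Hz; exact: HB.2.2.
    exact: (commute_span Hbil Hunit Hxy (Hz _ Ba) (Hz _ Bb)).
  move=> H.
  have Hc : forall a b, span3 one a b (mul a b) -> mul a b = mul b a.
    move=> a b Hab; case: (classic (lin_indep3 one a b)) => Hli.
      have [Hs Hd] := Hsub a b Hli Hab.
      exact: (H _ Hs Hd a b (span3_2 _ _ _) (span3_3 _ _ _)).
    exact: (dep_comm Hbil Hunit Hli).
  split.
    by move=> a b _ _ Hab; rewrite -Hc // Hab; exact: span3_1.
  by move=> a b _ _ Hab; rewrite -Hc // Hab.
Qed.
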